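(* Let $\pi\colon(\mathcal{G},R)\to(\mathcal{H},R)$ be a surjection of left bialgebroids over $R$ with left Hopf kernel $B=\mathcal{G}^{\mathrm{co}\mathcal{H}}$, and suppose $\mathcal{G}_\triangleleft$ is $R$-flat. (i) $B$ is a left $\mathcal{G}$-comodule algebra via $\lambda_B:=\Delta|_B\colon B\to\mathcal{G}\otimes_RB\subseteq\mathcal{G}\otimes_R\mathcal{G}$. (ii) The restriction $\varepsilon|_B\colon B\to R$ is an algebra morphism; in particular $B^+$ is a two-sided ideal in $B$ and $\mathcal{G}B^+\subseteq\ker\pi$. (iii) $\mathcal{G}B^+\subseteq\mathcal{G}$ is a left $\mathcal{G}$-module and a coring coideal, i.e. $\mathcal{G}B^+\subseteq\ker\varepsilon$ and $\Delta(\mathcal{G}B^+)\subseteq\mathcal{G}B^+\otimes_R\mathcal{G}+\mathcal{G}\otimes_R\mathcal{G}B^+$.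
   Context: $\Bbbk$ a commutative ring, $R$ a $\Bbbk$-algebra. Left bialgebroid $(\mathcal{G},R,s,t,\Delta,\varepsilon)$: $\Bbbk$-algebra, algebra map $s$ and anti-map $t\colon R\to\mathcal{G}$ with commuting images, $r\triangleright g\triangleleft r'=s(r)t(r')g$, $r\blacktriangleright g\blacktriangleleft r'=gt(r)s(r')$, coassociative counital $R$-bimodule map $\Delta\colon\mathcal{G}\to\mathcal{G}_\triangleleft\otimes_R{}_\triangleright\mathcal{G}$, $g\mapsto g_{(1)}\otimes g_{(2)}$, valued in the Takeuchi subspace and multiplicative, counit $\varepsilon\colon\mathcal{G}\to R$ with $\varepsilon(1)=1$, $\varepsilon(gg')=\varepsilon(g\blacktriangleleft\varepsilon(g'))=\varepsilon(\varepsilon(g')\blacktriangleright g)$. $\mathcal{G}_\triangleleft$: right $R$-module via $t$. A surjection of bialgebroids over $R$ is a surjective algebra map $\pi$ intertwining $s,t,\Delta,\varepsilon$. The left Hopf kernel is $B=\{g:g_{(1)}\otimes_R\pi(g_{(2)})=g\otimes_R1\}$, an $R$-subring with unit map $s$; $B^+=B\cap\ker\varepsilon$; $\mathcal{G}B^+$ is the left ideal generated by $B^+$. A left $\mathcal{G}$-comodule algebra is an $R$-ring $B$ with a coassociative counital left $R$-linear coaction $\lambda_B\colon B\to\mathcal{G}_\triangleleft\otimes_RB$ which is an algebra morphism. *)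

(* Defs.v *)
(* Tensor products over a (noncommutative) ring R are
   handled through their universal property (balanced biadditive maps). *)
From HB Require Import structures.
From mathcomp Require Import all_boot all_order all_algebra.

Set Implicit Arguments.
Unset Strict Implicit.
Unset Printing Implicit Defensive.

Import GRing.Theory.
Local Open Scope ring_scope.

(* The predicate P restricts the second argument to a subset of N      *)
(* (used for tensor products G ⊗_R B with B ⊆ G an R-submodule).       *)

Definition balanced_on (R : nzRingType) (M N A : zmodType) (P : N -> Prop)
    (ract : M -> R -> M) (lact : R -> N -> N) (f : M -> N -> A) : Prop :=
  [/\ forall m n n', P n -> P n' -> f m (n + n') = f m n + f m n',
      forall m m' n, P n -> f (m + m') n = f m n + f m' n &
      forall m r n, P n -> f (ract m r) n = f m (lact r n)].

(* Equality of the elements  sum_{(m,n) in xs} m ⊗ n  and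
   sum_{(m,n) in ys} m ⊗ n  in  M ⊗_R P. *)
Definition teq_on (R : nzRingType) (M N : zmodType) (P : N -> Prop)
    (ract : M -> R -> M) (lact : R -> N -> N) (xs ys : seq (M * N)) : Prop :=
  forall (A : zmodType) (f : M -> N -> A), balanced_on P ract lact f ->
    \sum_(p <- xs) f p.1 p.2 = \sum_(p <- ys) f p.1 p.2.

Definition teq (R : nzRingType) (M N : zmodType)
    (ract : M -> R -> M) (lact : R -> N -> N) (xs ys : seq (M * N)) : Prop :=
  teq_on (fun _ => True) ract lact xs ys.

Definition additive_fun (U V : zmodType) (f : U -> V) : Prop :=
  forall x y, f (x + y) = f x + f y.

Definition is_tensor (R : nzRingType) (M N T : zmodType)
    (ract : M -> R -> M) (lact : R -> N -> N) (tens : M -> N -> T) : Prop :=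
  balanced_on (fun _ => True) ract lact tens /\
  forall (A : zmodType) (f : M -> N -> A),
    balanced_on (fun _ => True) ract lact f ->
    (exists h : T -> A, additive_fun h /\ forall m n, h (tens m n) = f m n) /\
    (forall h1 h2 : T -> A, additive_fun h1 -> additive_fun h2 ->
       (forall m n, h1 (tens m n) = h2 (tens m n)) -> h1 =1 h2).

(* Flatness of the right R-module M (via ract):  M ⊗_R - preserves
   injections of left R-modules. *)
Definition right_flat (R : nzRingType) (M : zmodType) (ract : M -> R -> M) : Prop :=
  forall (N N' : lmodType R) (i : N' -> N),
    additive_fun i -> (forall r x, i (r *: x) = r *: i x) -> injective i ->
    forall xs : seq (M * N'),
      teq ract (fun r (n : N) => r *: n) [seq (p.1, i p.2) | p <- xs] [::] ->
      teq ract (fun r (n : N') => r *: n) xs [::].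

(* G_◁ : right R-module  g ◁ r = t(r) g ;  ▷G : left R-module  r ▷ g = s(r) g *)
Definition ractG (R G : nzRingType) (t : R -> G) : G -> R -> G := fun g r => t r * g.
Definition lactG (R G : nzRingType) (s : R -> G) : R -> G -> G := fun r g => s r * g.

Definition tsum (G : nzRingType) (T : zmodType) (tens : G -> G -> T)
    (xs : seq (G * G)) : T := \sum_(p <- xs) tens p.1 p.2.

(* Balanced triadditive maps on G_◁ ⊗_R ▷G_◁ ⊗_R ▷N (third argument
   restricted to P). *)
Definition balanced3_on (R G : nzRingType) (N A : zmodType) (P : N -> Prop)
    (s t : R -> G) (lactN : R -> N -> N) (f : G -> G -> N -> A) : Prop :=
  [/\ forall a a' b n, P n -> f (a + a') b n = f a b n + f a' b n,
      forall a b b' n, P n -> f a (b + b') n = f a b n + f a b' n,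
      forall a b n n', P n -> P n' -> f a b (n + n') = f a b n + f a b n',
      forall r a b n, P n -> f (t r * a) b n = f a (s r * b) n &
      forall r a b n, P n -> f a (t r * b) n = f a b (lactN r n)].

(* (G, R, s, t, Delta, eps) is a left bialgebroid, Delta : G -> T where
   (T, tens) is G_◁ ⊗_R ▷G.  Statements about Delta g are made through
   an arbitrary presentation  Delta g = sum_i tens a_i b_i. *)
Record is_lbialgebroid (R G : nzRingType) (s : {rmorphism R -> G}) (t : R -> G)
    (T : zmodType) (tens : G -> G -> T) (Delta : G -> T) (eps : G -> R) : Prop :=
  IsLBialgebroid {
  lb_t1 : t 1 = 1;
  lb_tD : forall x y, t (x + y) = t x + t y;
  lb_tM : forall x y, t (x * y) = t y * t x;
  lb_st : forall r r', s r * t r' = t r' * s r;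
  lb_tensor : is_tensor (ractG t) (lactG s) tens;
  lb_DeltaD : additive_fun Delta;
  lb_Delta_bimod : forall r r' g xs, Delta g = tsum tens xs ->
      Delta (s r * t r' * g) = tsum tens [seq (s r * p.1, t r' * p.2) | p <- xs];
  lb_Delta_takeuchi : forall g xs r, Delta g = tsum tens xs ->
      tsum tens [seq (p.1 * t r, p.2) | p <- xs]
      = tsum tens [seq (p.1, p.2 * s r) | p <- xs];
  lb_Delta1 : Delta 1 = tens 1 1;
  lb_DeltaM : forall g g' xs ys, Delta g = tsum tens xs -> Delta g' = tsum tens ys ->
      Delta (g * g') = tsum tens [seq (x.1 * y.1, x.2 * y.2) | x <- xs, y <- ys];
  lb_coassoc : forall g xs (dl dr : G * G -> seq (G * G)),
      Delta g = tsum tens xs ->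
      (forall p, p \in xs -> Delta p.1 = tsum tens (dl p) /\ Delta p.2 = tsum tens (dr p)) ->
      forall (A : zmodType) (f : G -> G -> G -> A),
        balanced3_on (fun _ => True) s t (lactG s) f ->
        \sum_(p <- xs) \sum_(q <- dl p) f q.1 q.2 p.2
        = \sum_(p <- xs) \sum_(q <- dr p) f p.1 q.1 q.2;
  lb_counitl : forall g xs, Delta g = tsum tens xs ->
      \sum_(p <- xs) s (eps p.1) * p.2 = g;
  lb_counitr : forall g xs, Delta g = tsum tens xs ->
      \sum_(p <- xs) t (eps p.2) * p.1 = g;
  lb_epsD : additive_fun eps;
  lb_eps_bimod : forall r r' g, eps (s r * t r' * g) = r * eps g * r';
  lb_eps1 : eps 1 = 1;
  lb_epsM1 : forall g g', eps (g * g') = eps (g * s (eps g'));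
  lb_epsM2 : forall g g', eps (g * g') = eps (g * t (eps g'))
}.

Record is_bialgebroid_surj (R G H : nzRingType)
    (s : {rmorphism R -> G}) (t : R -> G) (T : zmodType) (tens : G -> G -> T)
    (Delta : G -> T) (eps : G -> R)
    (sH : {rmorphism R -> H}) (tH : R -> H) (TH : zmodType) (tensH : H -> H -> TH)
    (DeltaH : H -> TH) (epsH : H -> R) (pi : {rmorphism G -> H}) : Prop :=
  IsBialgebroidSurj {
  bs_surj : forall h, exists g, pi g = h;
  bs_s : forall r, pi (s r) = sH r;
  bs_t : forall r, pi (t r) = tH r;
  bs_Delta : forall g xs, Delta g = tsum tens xs ->
      DeltaH (pi g) = tsum tensH [seq (pi p.1, pi p.2) | p <- xs];
  bs_eps : forall g, epsH (pi g) = eps g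
}.

(* Left Hopf kernel: g_(1) ⊗_R pi(g_(2)) = g ⊗_R 1  in  G_◁ ⊗_R ▷H. *)
Definition hopf_kernel (R G H : nzRingType) (t : R -> G) (sH : R -> H)
    (pi : G -> H) (T : zmodType) (tens : G -> G -> T) (Delta : G -> T) (g : G) : Prop :=
  forall xs, Delta g = tsum tens xs ->
    teq (ractG t) (fun r (h : H) => sH r * h) [seq (p.1, pi p.2) | p <- xs] [:: (g, 1)].

(* xs presents lambda_B(b) as an element of G_◁ ⊗_R B *)
Definition coact_rep (G : nzRingType) (T : zmodType) (tens : G -> G -> T)
    (Delta : G -> T) (B : G -> Prop) (b : G) (xs : seq (G * G)) : Prop :=
  (forall p, p \in xs -> B p.2) /\ Delta b = tsum tens xs.

Record is_comodule_algebra_Delta (R G : nzRingType) (s : {rmorphism R -> G})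
    (t : R -> G) (T : zmodType) (tens : G -> G -> T) (Delta : G -> T)
    (eps : G -> R) (B : G -> Prop) : Prop :=
  IsComodAlg {
  ca_B0 : B 0;
  ca_BB : forall x y, B x -> B y -> B (x - y);
  ca_B1 : B 1;
  ca_BM : forall x y, B x -> B y -> B (x * y);
  ca_Bs : forall r, B (s r);
  ca_val : forall b, B b -> exists xs, coact_rep tens Delta B b xs;
  ca_add : forall b b' xs ys zs, B b -> B b' ->
      coact_rep tens Delta B b xs -> coact_rep tens Delta B b' ys ->
      coact_rep tens Delta B (b + b') zs ->
      teq_on B (ractG t) (lactG s) zs (xs ++ ys);
  ca_lin : forall r b xs ys, B b ->
      coact_rep tens Delta B b xs -> coact_rep tens Delta B (s r * b) ys ->
      teq_on B (ractG t) (lactG s) ys [seq (s r * p.1, p.2) | p <- xs];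
  ca_coassoc : forall b xs (dl dr : G * G -> seq (G * G)), B b ->
      coact_rep tens Delta B b xs ->
      (forall p, p \in xs -> Delta p.1 = tsum tens (dl p) /\
                             coact_rep tens Delta B p.2 (dr p)) ->
      forall (A : zmodType) (f : G -> G -> G -> A),
        balanced3_on B s t (lactG s) f ->
        \sum_(p <- xs) \sum_(q <- dl p) f q.1 q.2 p.2
        = \sum_(p <- xs) \sum_(q <- dr p) f p.1 q.1 q.2;
  ca_counit : forall b xs, B b -> coact_rep tens Delta B b xs ->
      \sum_(p <- xs) s (eps p.1) * p.2 = b;
  ca_unit : forall xs, coact_rep tens Delta B 1 xs ->
      teq_on B (ractG t) (lactG s) xs [:: (1, 1)];
  ca_mul : forall b b' xs ys zs, B b -> B b' ->
      coact_rep tens Delta B b xs -> coact_rep tens Delta B b' ys ->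
      coact_rep tens Delta B (b * b') zs ->
      teq_on B (ractG t) (lactG s) zs
        [seq (x.1 * y.1, x.2 * y.2) | x <- xs, y <- ys]
}.

(* Main.v *)
Require Import Defs.
From HB Require Import structures.
From mathcomp Require Import all_boot all_order all_algebra.
From mathcomp Require Import boolp.
Set Implicit Arguments.
Unset Strict Implicit.
Unset Printing Implicit Defensive.
Import GRing.Theory.
Local Open Scope ring_scope.

Definition quot (X : Type) (E : X -> X -> Prop) := {P : X -> Prop | exists x, P = E x}.

Record zpre (X : Type) := ZPre {
 zE : X -> X -> Prop; z0 : X; zadd : X -> X -> X; zopp : X -> X;
 zE_refl : forall x, zE x x;
 zE_sym : forall x y, zE x y -> zE y x;
 zE_trans : forall x y z, zE x y -> zE y z -> zE x z;
 zaddE : forall x x' y y', zE x x' -> zE y y' -> zE (zadd x y) (zadd x' y');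
 zoppE : forall x x', zE x x' -> zE (zopp x) (zopp x');
 zaddA : forall x y z, zE (zadd x (zadd y z)) (zadd (zadd x y) z);
 zaddC : forall x y, zE (zadd x y) (zadd y x);
 zadd0 : forall x, zE (zadd z0 x) x;
 zaddN : forall x, zE (zadd (zopp x) x) z0 }.

Definition zq X (p : zpre X) : Type := quot (zE p).
HB.instance Definition _ X (p : zpre X) := gen_eqMixin (zq p).
HB.instance Definition _ X (p : zpre X) := gen_choiceMixin (zq p).

Section ZQ.
Variables (X : Type) (p : zpre X).
Definition cls (x : X) : zq p := exist _ (zE p x) (ex_intro _ x erefl).
Definition rep (q : zq p) : X := projT1 (cid (proj2_sig q)).

Lemma exist_eq (P Q : X -> Prop) hP hQ : P = Q ->
  exist (fun P => exists x, P = zE p x) P hP = exist _ Q hQ.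
Proof. by move=> PQ; subst; congr exist; apply: Prop_irrelevance. Qed.

Lemma cls_eq x y : zE p x y -> cls x = cls y.
Proof.
move=> Exy; apply: exist_eq; apply: funext => z; apply: propext; split => H.
  exact: zE_trans (zE_sym Exy) H.
exact: zE_trans Exy H.
Qed.

Lemma clsP x y : cls x = cls y -> zE p x y.
Proof.
move=> /(f_equal (@proj1_sig _ _)) /= E.
by rewrite E; apply: zE_refl.
Qed.

Lemma repK q : cls (rep q) = q.
Proof.
case: q => P hP; rewrite /rep /=; case: (cid hP) => x /= Px.
by apply: exist_eq.
Qed.

Lemma rep_cls x : zE p (rep (cls x)) x.
Proof. by apply: clsP; rewrite repK. Qed.

Definition qadd (a b : zq p) := cls (zadd p (rep a) (rep b)).
Definition qopp (a : zq p) := cls (zopp p (rep a)).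
Definition q0 := cls (z0 p).

Lemma qaddE x y : qadd (cls x) (cls y) = cls (zadd p x y).
Proof. by apply: cls_eq; apply: zaddE; apply: rep_cls. Qed.
Lemma qoppE x : qopp (cls x) = cls (zopp p x).
Proof. by apply: cls_eq; apply: zoppE; apply: rep_cls. Qed.

Lemma qaddA : associative qadd.
Proof.
move=> a b c; rewrite -[a]repK -[b]repK -[c]repK !qaddE; apply: cls_eq.
exact: zaddA.
Qed.
Lemma qaddC : commutative qadd.
Proof. by move=> a b; rewrite -[a]repK -[b]repK !qaddE; apply: cls_eq; apply: zaddC. Qed.
Lemma qadd0 : left_id q0 qadd.
Proof. by move=> a; rewrite -[a]repK /q0 qaddE; apply: cls_eq; apply: zadd0. Qed.
Lemma qaddN : left_inverse q0 qopp qadd.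
Proof. by move=> a; rewrite -[a]repK qoppE qaddE; apply: cls_eq; apply: zaddN. Qed.
End ZQ.

HB.instance Definition _ X (p : zpre X) :=
  GRing.isZmodule.Build (zq p) (@qaddA X p) (@qaddC X p) (@qadd0 X p) (@qaddN X p).

Section ZQ2.
Variables (X : Type) (p : zpre X).
Lemma cls_add x y : cls p x + cls p y = cls p (zadd p x y).
Proof. exact: qaddE. Qed.
Lemma cls_opp x : - cls p x = cls p (zopp p x).
Proof. exact: qoppE. Qed.
Lemma cls_0 : 0 = cls p (z0 p).
Proof. by []. Qed.
End ZQ2.

Record lpre (R : nzRingType) (X : Type) := LPre {
  lz : zpre X; lsc : R -> X -> X;
  lscE : forall r x x', zE lz x x' -> zE lz (lsc r x) (lsc r x');
  lscA : forall a b x, zE lz (lsc a (lsc b x)) (lsc (a * b) x);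
  lsc1 : forall x, zE lz (lsc 1 x) x;
  lscDr : forall a x y, zE lz (lsc a (zadd lz x y)) (zadd lz (lsc a x) (lsc a y));
  lscDl : forall a b x, zE lz (lsc (a + b) x) (zadd lz (lsc a x) (lsc b x)) }.

Definition lq R X (p : lpre R X) : Type := zq (lz p).
HB.instance Definition _ R X (p : lpre R X) := GRing.Zmodule.on (lq p).

Section LQ.
Variables (R : nzRingType) (X : Type) (p : lpre R X).
Definition lqsc (r : R) (a : lq p) : lq p := cls (lz p) (lsc p r (rep a)).
Lemma lqscE r x : lqsc r (cls (lz p) x) = cls (lz p) (lsc p r x).
Proof. by apply: cls_eq; apply: lscE; apply: rep_cls. Qed.
Lemma lqscA a b v : lqsc a (lqsc b v) = lqsc (a * b) v.
Proof. by rewrite -[v]repK !lqscE; apply: cls_eq; apply: lscA. Qed.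
Lemma lqsc1 : left_id 1 lqsc.
Proof. by move=> v; rewrite -[v]repK !lqscE; apply: cls_eq; apply: lsc1. Qed.
Lemma lqscDr : right_distributive lqsc +%R.
Proof.
move=> a u v; rewrite -[u]repK -[v]repK /= cls_add !lqscE cls_add.
by apply: cls_eq; apply: lscDr.
Qed.
Lemma lqscDl v : {morph lqsc^~ v: a b / a + b}.
Proof.
move=> a b; rewrite -[v]repK /= !lqscE cls_add.
by apply: cls_eq; apply: lscDl.
Qed.
End LQ.

HB.instance Definition _ R X (p : lpre R X) :=
  GRing.Zmodule_isLmodule.Build R (lq p) (@lqscA R X p) (@lqsc1 R X p)
    (@lqscDr R X p) (@lqscDl R X p).

Section LQ2.
Variables (R : nzRingType) (X : Type) (p : lpre R X).
Lemma cls_scale r x : r *: (cls (lz p) x : lq p) = cls (lz p) (lsc p r x).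
Proof. exact: lqscE. Qed.
End LQ2.

Section Bal.
Variables (R : nzRingType) (M N A : zmodType) (P : N -> Prop)
  (ract : M -> R -> M) (lact : R -> N -> N) (f : M -> N -> A).
Hypothesis fb : balanced_on P ract lact f.
Lemma bal_Dl m m' n : P n -> f (m + m') n = f m n + f m' n.
Proof. by case: fb => _ H _; apply: H. Qed.
Lemma bal_0l n : P n -> f 0 n = 0.
Proof. by move=> Pn; apply: (addrI (f 0 n)); rewrite -bal_Dl // !addr0. Qed.
Lemma bal_Nl m n : P n -> f (- m) n = - f m n.
Proof. by move=> Pn; apply: (addrI (f m n)); rewrite -bal_Dl // !subrr bal_0l. Qed.
Lemma bal_Bl m m' n : P n -> f (m - m') n = f m n - f m' n.
Proof. by move=> Pn; rewrite bal_Dl // bal_Nl. Qed.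
Lemma bal_act m r n : P n -> f (ract m r) n = f m (lact r n).
Proof. by case: fb => _ _ H; apply: H. Qed.
Lemma bal_suml I (r : seq I) (F : I -> M) n : P n ->
  f (\sum_(i <- r) F i) n = \sum_(i <- r) f (F i) n.
Proof.
move=> Pn; elim: r => [|a r IH]; first by rewrite !big_nil bal_0l.
by rewrite !big_cons bal_Dl // IH.
Qed.
Lemma bal_Dr' m n n' : P n -> P n' -> f m (n + n') = f m n + f m n'.
Proof. by case: fb => H _ _; apply: H. Qed.
End Bal.

Section BalT.
Variables (R : nzRingType) (M N A : zmodType)
  (ract : M -> R -> M) (lact : R -> N -> N) (f : M -> N -> A).
Hypothesis fb : balanced_on (fun _ => True) ract lact f.
Lemma bal_Dr m n n' : f m (n + n') = f m n + f m n'.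
Proof. by case: fb => H _ _; apply: H. Qed.
Lemma bal_0r m : f m 0 = 0.
Proof. by apply: (addrI (f m 0)); rewrite -bal_Dr // !addr0. Qed.
Lemma bal_Nr m n : f m (- n) = - f m n.
Proof. by apply: (addrI (f m n)); rewrite -bal_Dr // !subrr bal_0r. Qed.
Lemma bal_Br m n n' : f m (n - n') = f m n - f m n'.
Proof. by rewrite bal_Dr bal_Nr. Qed.
Lemma bal_sumr I (r : seq I) (F : I -> N) m :
  f m (\sum_(i <- r) F i) = \sum_(i <- r) f m (F i).
Proof.
elim: r => [|a r IH]; first by rewrite !big_nil bal_0r.
by rewrite !big_cons bal_Dr IH.
Qed.
End BalT.

Lemma mk_bal (R : nzRingType) (M N A : zmodType) (P : N -> Prop)
  (ract : M -> R -> M) (lact : R -> N -> N) (f : M -> N -> A) :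
  (forall m n n', P n -> P n' -> f m (n + n') = f m n + f m n') ->
  (forall m m' n, P n -> f (m + m') n = f m n + f m' n) ->
  (forall m r n, P n -> f (ract m r) n = f m (lact r n)) ->
  balanced_on P ract lact f.
Proof. by move=> *; split. Qed.

Section TeqBasic.
Variables (R : nzRingType) (M N : zmodType) (P : N -> Prop)
  (ract : M -> R -> M) (lact : R -> N -> N).
Local Notation E := (teq_on P ract lact).
Lemma teq_refl xs : E xs xs. Proof. by []. Qed.
Lemma teq_sym xs ys : E xs ys -> E ys xs.
Proof. by move=> H A f fb; rewrite H. Qed.
Lemma teq_trans xs ys zs : E xs ys -> E ys zs -> E xs zs.
Proof. by move=> H1 H2 A f fb; rewrite H1 // H2. Qed.
Lemma teq_cat xs xs' ys ys' : E xs xs' -> E ys ys' -> E (xs ++ ys) (xs' ++ ys').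
Proof. by move=> H1 H2 A f fb; rewrite !big_cat H1 // H2. Qed.
End TeqBasic.

Section TensPre.
Variables (R : nzRingType) (M N : zmodType)
  (ract : M -> R -> M) (lact : R -> N -> N).
Local Notation E := (teq ract lact).
Definition topp (xs : seq (M * N)) := [seq (- p.1, p.2) | p <- xs].

Lemma sum_topp (A : zmodType) (f : M -> N -> A) xs : balanced_on (fun _ => True) ract lact f ->
  \sum_(p <- topp xs) f p.1 p.2 = - \sum_(p <- xs) f p.1 p.2.
Proof.
move=> fb; rewrite big_map -sumrN; apply: eq_bigr => p _ /=.
exact: (bal_Nl fb).
Qed.

Definition tzpre : zpre (seq (M * N)).
refine (@ZPre _ E [::] cat topp (@teq_refl _ _ _ _ _ _) (@teq_sym _ _ _ _ _ _)
  (@teq_trans _ _ _ _ _ _) (@teq_cat _ _ _ _ _ _) _ _ _ _ _).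
- by move=> x x' H A f fb; rewrite !sum_topp // H.
- by move=> x y z; rewrite catA.
- by move=> x y A f fb; rewrite !big_cat; apply: addrC.
- by move=> x.
- by move=> x A f fb; rewrite big_cat sum_topp // big_nil; apply: addNr.
Defined.

Variable sc : R -> M -> M.
Hypotheses (scD : forall r m m', sc r (m + m') = sc r m + sc r m')
  (scDl : forall a b m, sc (a + b) m = sc a m + sc b m)
  (scA : forall a b m, sc a (sc b m) = sc (a * b) m)
  (sc1 : forall m, sc 1 m = m)
  (scR : forall r r' m, sc r (ract m r') = ract (sc r m) r').

Definition tsc r (xs : seq (M * N)) := [seq (sc r p.1, p.2) | p <- xs].

Lemma bal_sc (A : zmodType) (f : M -> N -> A) r : balanced_on (fun _ => True) ract lact f ->
  balanced_on (fun _ => True) ract lact (fun m n => f (sc r m) n).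
Proof.
move=> fb; apply: mk_bal => *.
- exact: (bal_Dr fb).
- by rewrite scD (bal_Dl fb).
- by rewrite scR (bal_act fb).
Qed.

Definition tlpre : lpre R (seq (M * N)).
refine (@LPre R _ tzpre tsc _ _ _ _ _).
- move=> r x x' H A f fb; rewrite /= !big_map.
  exact: (H _ (fun m n => f (sc r m) n) (bal_sc r fb)).
- by move=> a b x A f fb; rewrite /= !big_map; apply: eq_bigr => p _; rewrite scA.
- by move=> x A f fb; rewrite /= big_map; apply: eq_bigr => p _; rewrite sc1.
- by move=> a x y; rewrite /= /tsc map_cat.
- move=> a b x A f fb; rewrite big_cat !big_map.
  rewrite (eq_bigr (fun p => f (sc a p.1) p.2 + f (sc b p.1) p.2)).
    exact: big_split.
  by move=> p _; rewrite scDl (bal_Dl fb).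
Defined.

Definition Tens := lq tlpre.
Definition tcls (xs : seq (M * N)) : Tens := cls (lz tlpre) xs.

Lemma tcls_eq xs ys : E xs ys -> tcls xs = tcls ys.
Proof. move=> H; exact: (@cls_eq _ (lz tlpre) xs ys H). Qed.
Lemma tclsP xs ys : tcls xs = tcls ys -> E xs ys.
Proof. move=> H; exact: (@clsP _ (lz tlpre) xs ys H). Qed.
Lemma tcls_cat xs ys : tcls (xs ++ ys) = tcls xs + tcls ys.
Proof. by rewrite /tcls cls_add. Qed.
Lemma tcls_nil : tcls [::] = 0.
Proof. by []. Qed.
Lemma tcls_scale r xs : r *: tcls xs = tcls (tsc r xs).
Proof. exact: (@cls_scale _ _ tlpre r xs). Qed.
Lemma tcls_rep (w : Tens) : tcls (rep w) = w.
Proof. exact: (@repK _ (lz tlpre) w). Qed.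
Lemma tcls_cons x xs : tcls (x :: xs) = tcls [:: x] + tcls xs.
Proof. by rewrite -tcls_cat. Qed.

Definition tlift (A : zmodType) (f : M -> N -> A) (w : Tens) : A :=
  \sum_(p <- rep w) f p.1 p.2.
Lemma tlift_cls (A : zmodType) (f : M -> N -> A) xs : balanced_on (fun _ => True) ract lact f ->
  tlift f (tcls xs) = \sum_(p <- xs) f p.1 p.2.
Proof. by move=> fb; apply: (@rep_cls _ (lz tlpre) xs). Qed.

Lemma tcls_sum xs : tcls xs = \sum_(q <- xs) tcls [:: q].
Proof.
elim: xs => [|a xs IH]; first by rewrite big_nil tcls_nil.
by rewrite tcls_cons big_cons IH.
Qed.
Lemma tcls_Dl m m' n : tcls [:: (m + m', n)] = tcls [:: (m, n)] + tcls [:: (m', n)].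
Proof.
rewrite -tcls_cat; apply: tcls_eq => A f fb.
by rewrite big_cat !big_seq1 /= (bal_Dl fb).
Qed.
Lemma tcls_Dr m n n' : tcls [:: (m, n + n')] = tcls [:: (m, n)] + tcls [:: (m, n')].
Proof.
rewrite -tcls_cat; apply: tcls_eq => A f fb.
by rewrite big_cat !big_seq1 /= (bal_Dr fb).
Qed.
Lemma tcls_act m r n : tcls [:: (ract m r, n)] = tcls [:: (m, lact r n)].
Proof. by apply: tcls_eq => A f fb; rewrite !big_seq1 /= (bal_act fb). Qed.
Lemma tcls_scale1 r m n : r *: tcls [:: (m, n)] = tcls [:: (sc r m, n)].
Proof. by rewrite tcls_scale. Qed.
End TensPre.

Section QSub.
Variables (V : zmodType) (S : V -> Prop).
Hypotheses (S0 : S 0) (SB : forall x y, S x -> S y -> S (x - y)).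
Lemma SN x : S x -> S (- x).
Proof. by move=> Sx; rewrite -sub0r; apply: SB. Qed.
Lemma SD x y : S x -> S y -> S (x + y).
Proof. by move=> Sx Sy; rewrite -[y]opprK; apply: SB => //; apply: SN. Qed.

Definition qzpre : zpre V.
refine (@ZPre V (fun x y => S (x - y)) 0 +%R -%R _ _ _ _ _ _ _ _ _) => /=.
- by move=> x; rewrite subrr.
- by move=> x y H; rewrite -opprB; apply: SN.
- move=> x y z H1 H2; have -> : x - z = (x - y) + (y - z) by rewrite addrA subrK.
  exact: SD.
- by move=> x x' y y' H1 H2; rewrite opprD addrACA; apply: SD.
- by move=> x x' H; rewrite -opprD; apply: SN.
- by move=> x y z; rewrite addrA subrr.
- by move=> x y; rewrite [x + y]addrC subrr.
- by move=> x; rewrite add0r subrr.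
- by move=> x; rewrite addNr subrr.
Defined.
Definition QZ := zq qzpre.
Definition qcls (x : V) : QZ := cls qzpre x.
Lemma qcls_add x y : qcls (x + y) = qcls x + qcls y.
Proof. by rewrite /qcls cls_add. Qed.
Lemma qcls0 : qcls 0 = 0. Proof. by []. Qed.
Lemma qcls_eq0 x : qcls x = 0 -> S x.
Proof. by move=> /(@clsP _ qzpre x 0) /=; rewrite subr0. Qed.
Lemma qcls_S x : S x -> qcls x = 0.
Proof. by move=> Sx; apply: (@cls_eq _ qzpre x 0) => /=; rewrite subr0. Qed.
Lemma qcls_sum I (r : seq I) F : qcls (\sum_(i <- r) F i) = \sum_(i <- r) qcls (F i).
Proof.
elim: r => [|a r IH]; first by rewrite !big_nil.
by rewrite !big_cons qcls_add IH.
Qed.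
Lemma qrep_cls x : S (rep (qcls x) - x).
Proof. exact: (@rep_cls _ qzpre x). Qed.
Lemma qclsK (w : QZ) : qcls (rep w) = w.
Proof. exact: repK. Qed.
End QSub.

Section QSubL.
Variables (R : nzRingType) (V : lmodType R) (S : V -> Prop).
Hypotheses (S0 : S 0) (SB : forall x y, S x -> S y -> S (x - y))
  (SZ : forall r x, S x -> S (r *: x)).
Definition qlpre : lpre R V.
refine (@LPre R V (qzpre S0 SB) (fun r x => r *: x) _ _ _ _ _).
- by move=> r x x' H /=; rewrite -scalerBr; apply: SZ.
- by move=> a b x /=; rewrite scalerA subrr.
- by move=> x /=; rewrite scale1r subrr.
- by move=> a x y /=; rewrite scalerDr subrr.
- by move=> a b x /=; rewrite scalerDl subrr.
Defined.
Definition QL := lq qlpre.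
Definition lcls (x : V) : QL := cls (lz qlpre) x.
Lemma lcls_add x y : lcls (x + y) = lcls x + lcls y.
Proof. by rewrite /lcls cls_add. Qed.
Lemma lcls_scale r x : lcls (r *: x) = r *: lcls x.
Proof. by rewrite /lcls cls_scale. Qed.
Lemma lcls_eq x y : lcls x = lcls y -> S (x - y).
Proof. exact: (@clsP _ (lz qlpre) x y). Qed.
Lemma lcls_S x y : S (x - y) -> lcls x = lcls y.
Proof. exact: (@cls_eq _ (lz qlpre) x y). Qed.
Lemma lrep_cls x : S (rep (lcls x) - x).
Proof. exact: (@rep_cls _ (lz qlpre) x). Qed.
Lemma lclsK (w : QL) : lcls (rep w) = w.
Proof. exact: (@repK _ (lz qlpre) w). Qed.
End QSubL.

Definition rmod (R G : nzRingType) (s : {rmorphism R -> G}) : Type := G.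
HB.instance Definition _ (R G : nzRingType) (s : {rmorphism R -> G}) :=
  GRing.Zmodule.on (rmod s).
Section RMod.
Variables (R G : nzRingType) (s : {rmorphism R -> G}).
Definition rmsc (r : R) (g : rmod s) : rmod s := (s r * (g : G) : G).
Lemma rmscA a b v : rmsc a (rmsc b v) = rmsc (a * b) v.
Proof. by rewrite /rmsc rmorphM mulrA. Qed.
Lemma rmsc1 : left_id 1 rmsc.
Proof. by move=> v; rewrite /rmsc rmorph1 mul1r. Qed.
Lemma rmscDr : right_distributive rmsc +%R.
Proof. by move=> a u v; rewrite /rmsc mulrDr. Qed.
Lemma rmscDl v : {morph rmsc^~ v: a b / a + b}.
Proof. by move=> a b; rewrite /rmsc rmorphD mulrDl. Qed.
End RMod.
HB.instance Definition _ (R G : nzRingType) (s : {rmorphism R -> G}) :=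
  GRing.Zmodule_isLmodule.Build R (rmod s) (@rmscA R G s) (@rmsc1 R G s)
    (@rmscDr R G s) (@rmscDl R G s).

Section Subl.
Variables (R : nzRingType) (V : lmodType R) (S : V -> Prop).
Definition subl (S0 : S 0) (SB : forall x y, S x -> S y -> S (x - y))
  (SZ : forall r x, S x -> S (r *: x)) : Type := {x : V | S x}.
End Subl.
HB.instance Definition _ (R : nzRingType) (V : lmodType R) S S0 SB SZ := gen_eqMixin (@subl R V S S0 SB SZ).
HB.instance Definition _ (R : nzRingType) (V : lmodType R) S S0 SB SZ := gen_choiceMixin (@subl R V S S0 SB SZ).
Section Subl2.
Variables (R : nzRingType) (V : lmodType R) (S : V -> Prop).
Hypotheses (S0 : S 0) (SB : forall x y, S x -> S y -> S (x - y))
  (SZ : forall r x, S x -> S (r *: x)).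
Local Notation U := (subl S0 SB SZ).
Lemma subl_inj (a b : U) : proj1_sig a = proj1_sig b -> a = b.
Proof.
case: a => x hx; case: b => y hy /= xy; subst.
by congr exist; apply: Prop_irrelevance.
Qed.
Definition sl0 : U := exist _ 0 S0.
Definition slopp (a : U) : U := exist _ (- proj1_sig a) (SN S0 SB (proj2_sig a)).
Definition sladd (a b : U) : U :=
  exist _ (proj1_sig a + proj1_sig b) (SD S0 SB (proj2_sig a) (proj2_sig b)).
Lemma sladdA : associative sladd.
Proof. by move=> a b c; apply: subl_inj; rewrite /= addrA. Qed.
Lemma sladdC : commutative sladd.
Proof. by move=> a b; apply: subl_inj; rewrite /= addrC. Qed.
Lemma sladd0 : left_id sl0 sladd.
Proof. by move=> a; apply: subl_inj; rewrite /= add0r. Qed.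
Lemma sladdN : left_inverse sl0 slopp sladd.
Proof. by move=> a; apply: subl_inj; rewrite /= addNr. Qed.
End Subl2.
HB.instance Definition _ (R : nzRingType) (V : lmodType R) S S0 SB SZ :=
  GRing.isZmodule.Build (@subl R V S S0 SB SZ) (@sladdA R V S S0 SB SZ)
   (@sladdC R V S S0 SB SZ) (@sladd0 R V S S0 SB SZ) (@sladdN R V S S0 SB SZ).
Section Subl3.
Variables (R : nzRingType) (V : lmodType R) (S : V -> Prop).
Hypotheses (S0 : S 0) (SB : forall x y, S x -> S y -> S (x - y))
  (SZ : forall r x, S x -> S (r *: x)).
Local Notation U := (subl S0 SB SZ).
Definition slsc r (a : U) : U := exist _ (r *: proj1_sig a) (SZ r (proj2_sig a)).
Lemma slscA a b v : slsc a (slsc b v) = slsc (a * b) v.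
Proof. by apply: subl_inj; rewrite /= scalerA. Qed.
Lemma slsc1 : left_id 1 slsc.
Proof. by move=> v; apply: subl_inj; rewrite /= scale1r. Qed.
Lemma slscDr : right_distributive slsc +%R.
Proof. by move=> a u v; apply: subl_inj; rewrite /= scalerDr. Qed.
Lemma slscDl v : {morph slsc^~ v: a b / a + b}.
Proof. by move=> a b; apply: subl_inj; rewrite /= scalerDl. Qed.
End Subl3.
HB.instance Definition _ (R : nzRingType) (V : lmodType R) S S0 SB SZ :=
  GRing.Zmodule_isLmodule.Build R (@subl R V S S0 SB SZ) (@slscA R V S S0 SB SZ)
    (@slsc1 R V S S0 SB SZ) (@slscDr R V S S0 SB SZ) (@slscDl R V S S0 SB SZ).

Lemma add_sum (U V : zmodType) (h : U -> V) I (r : seq I) F :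
  additive_fun h -> h (\sum_(i <- r) F i) = \sum_(i <- r) h (F i).
Proof.
move=> hA; have h0 : h 0 = 0 by apply: (addrI (h 0)); rewrite -hA !addr0.
elim: r => [|a r IH]; first by rewrite !big_nil.
by rewrite !big_cons hA IH.
Qed.

Lemma add_N (U V : zmodType) (h : U -> V) x : additive_fun h -> h (- x) = - h x.
Proof.
move=> hA; have h0 : h 0 = 0 by apply: (addrI (h 0)); rewrite -hA !addr0.
by apply: (addrI (h x)); rewrite -hA !subrr.
Qed.
Lemma add_B (U V : zmodType) (h : U -> V) x y : additive_fun h -> h (x - y) = h x - h y.
Proof. by move=> hA; rewrite hA add_N. Qed.
Lemma add_0 (U V : zmodType) (h : U -> V) : additive_fun h -> h 0 = 0.
Proof. by move=> hA; apply: (addrI (h 0)); rewrite -hA !addr0. Qed.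

Section Main.
Variables (R G H : nzRingType) (s : {rmorphism R -> G}) (t : R -> G) (T : zmodType)
  (tens : G -> G -> T) (Delta : G -> T) (eps : G -> R)
  (sH : {rmorphism R -> H}) (tH : R -> H) (TH : zmodType) (tensH : H -> H -> TH)
  (DeltaH : H -> TH) (epsH : H -> R) (pi : {rmorphism G -> H}).
Hypotheses (HG : is_lbialgebroid s t tens Delta eps)
  (HHb : is_lbialgebroid sH tH tensH DeltaH epsH)
  (Hpi : is_bialgebroid_surj s t tens Delta eps sH tH tensH DeltaH epsH pi)
  (Hflat : right_flat (ractG t)).

Definition B := hopf_kernel t sH pi tens Delta.
Local Notation balG := (balanced_on (fun _ => True) (ractG t) (lactG s)).
Local Notation balGH := (balanced_on (fun _ => True) (ractG t) (fun r (h : H) => sH r * h)).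
Local Notation teqGH := (teq (ractG t) (fun r (h : H) => sH r * h)).
Definition mapPi (xs : seq (G * G)) := [seq (p.1, pi p.2) | p <- xs].

Lemma t0 : t 0 = 0.
Proof. by apply: (addrI (t 0)); rewrite -(lb_tD HG) !addr0. Qed.
Lemma tN r : t (- r) = - t r.
Proof. by apply: (addrI (t r)); rewrite -(lb_tD HG) !subrr t0. Qed.
Lemma tens_bal : balG tens.
Proof. by case: (lb_tensor HG). Qed.

Lemma tsum_cat xs ys : tsum tens (xs ++ ys) = tsum tens xs + tsum tens ys.
Proof. by rewrite /tsum big_cat. Qed.
Lemma tsum_topp xs : tsum tens (topp xs) = - tsum tens xs.
Proof. by rewrite /tsum (sum_topp _ tens_bal). Qed.
Lemma tsum1 a b : tsum tens [:: (a, b)] = tens a b.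
Proof. by rewrite /tsum big_seq1. Qed.

Lemma Tfact (A : zmodType) (f : G -> G -> A) xs ys : balG f ->
  tsum tens xs = tsum tens ys -> \sum_(p <- xs) f p.1 p.2 = \sum_(p <- ys) f p.1 p.2.
Proof.
move=> fb E; case: (lb_tensor HG) => _ /(_ A f fb) [[h [hA hf]] _].
have K zs : \sum_(p <- zs) f p.1 p.2 = h (tsum tens zs).
  by rewrite /tsum add_sum //; apply: eq_bigr => p _; rewrite hf.
by rewrite !K E.
Qed.

Lemma T_gen (x : T) : exists xs, x = tsum tens xs.
Proof.
pose S := fun w : T => exists xs, w = tsum tens xs.
have S0 : S 0 by exists [::]; rewrite /tsum big_nil.
have SB : forall x y, S x -> S y -> S (x - y).
  by move=> a b [xs ->] [ys ->]; exists (xs ++ topp ys); rewrite tsum_cat tsum_topp.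
case: (lb_tensor HG) => _ /(_ (QZ S0 SB) (fun _ _ => 0)) [].
  by apply: mk_bal => *; rewrite ?addr0.
move=> _ /(_ (@qcls _ _ S0 SB) (fun _ => 0)) U.
have := U (qcls_add S0 SB) (fun a b => esym (addr0 0)).
move=> /(_ _) H1; apply: (qcls_eq0 (S0 := S0) (SB := SB)); apply: H1.
move=> m n; apply: qcls_S; exists [:: (m, n)]; by rewrite tsum1.
Qed.

Definition presD (g : G) : seq (G * G) := projT1 (cid (T_gen (Delta g))).
Lemma presDP g : Delta g = tsum tens (presD g).
Proof. by rewrite /presD; case: cid. Qed.

Lemma Delta0 : Delta 0 = 0.
Proof. exact: add_0 (lb_DeltaD HG). Qed.
Lemma DeltaB x y : Delta (x - y) = Delta x - Delta y.
Proof. exact: add_B (lb_DeltaD HG). Qed.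

Lemma Tpi xs ys : tsum tens xs = tsum tens ys -> teqGH (mapPi xs) (mapPi ys).
Proof.
move=> E A f fb; rewrite !big_map; apply: (Tfact (f := fun m n => f m (pi n))) => //.
apply: mk_bal => *.
- by rewrite rmorphD (bal_Dr fb).
- exact: (bal_Dl fb).
- by rewrite /ractG /lactG (bal_act fb) // rmorphM (bs_s Hpi).
Qed.

Lemma B_iff g : B g <-> teqGH (mapPi (presD g)) [:: (g, 1)].
Proof.
split; first by move=> Bg; apply: Bg; apply: presDP.
move=> H1 xs E; apply: teq_trans H1; apply: Tpi; rewrite -E; exact: presDP.
Qed.

Lemma B_use g xs (A : zmodType) (f : G -> H -> A) : B g -> Delta g = tsum tens xs ->
  balGH f -> \sum_(p <- xs) f p.1 (pi p.2) = f g 1.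
Proof.
move=> Bg E fb; have := Bg xs E A f fb; rewrite big_map big_seq1 //.
Qed.


Lemma sum_cat (A : zmodType) (I : Type) (F : I -> A) xs ys :
  \sum_(p <- xs ++ ys) F p = \sum_(p <- xs) F p + \sum_(p <- ys) F p.
Proof. exact: big_cat. Qed.

Lemma sum_ap (A : zmodType) (F : G * G -> A) (xs ys : seq (G * G)) :
  \sum_(p <- [seq (x.1 * y.1, x.2 * y.2) | x <- xs, y <- ys]) F p =
  \sum_(x <- xs) \sum_(y <- ys) F (x.1 * y.1, x.2 * y.2).
Proof. exact: big_allpairs_dep. Qed.

Lemma B_of g xs : Delta g = tsum tens xs -> teqGH (mapPi xs) [:: (g, 1)] -> B g.
Proof. by move=> E H1; apply/B_iff; apply: teq_trans H1; apply: Tpi; rewrite -E presDP. Qed.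

Lemma s1 : s 1 = 1. Proof. exact: rmorph1. Qed.
Lemma eps_tl r g : eps (t r * g) = eps g * r.
Proof. by have := lb_eps_bimod HG 1 r g; rewrite s1 mul1r mul1r. Qed.
Lemma eps_sl r g : eps (s r * g) = r * eps g.
Proof. by have := lb_eps_bimod HG r 1 g; rewrite (lb_t1 HG) mulr1 mulr1. Qed.
Lemma eps_s r : eps (s r) = r.
Proof. by have := eps_sl r 1; rewrite mulr1 (lb_eps1 HG) mulr1. Qed.
Lemma eps_t r : eps (t r) = r.
Proof. by have := eps_tl r 1; rewrite mulr1 (lb_eps1 HG) mul1r. Qed.
Lemma epsH_t r : epsH (tH r) = r.
Proof.
have := lb_eps_bimod HHb 1 r 1; rewrite rmorph1 !mul1r mulr1 => ->.
by rewrite (lb_eps1 HHb) mul1r.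
Qed.
Lemma epsH_sl r h : epsH (sH r * h) = r * epsH h.
Proof. by have := lb_eps_bimod HHb r 1 h; rewrite (lb_t1 HHb) mulr1 mulr1. Qed.
Lemma eps0 : eps 0 = 0.
Proof. exact: add_0 (lb_epsD HG). Qed.

Lemma Delta1 : Delta 1 = tsum tens [:: (1, 1)].
Proof. by rewrite tsum1 (lb_Delta1 HG). Qed.
Lemma Delta_t r : Delta (t r) = tsum tens [:: (1, t r)].
Proof.
have := lb_Delta_bimod HG 1 r Delta1; rewrite s1 !mul1r mulr1 => ->.
by rewrite /= ?mulr1 ?mul1r.
Qed.
Lemma Delta_s r : Delta (s r) = tsum tens [:: (s r, 1)].
Proof.
have := lb_Delta_bimod HG r 1 Delta1; rewrite (lb_t1 HG) !mulr1 => ->.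
by rewrite /= ?mulr1 ?mul1r.
Qed.

Lemma eps_bt b r : B b -> eps (b * t r) = eps b * r.
Proof.
move=> Bb; set xs := presD b.
have E := lb_DeltaM HG (presDP b) (Delta_t r).
have := lb_counitr HG E; move/(f_equal eps).
rewrite add_sum; last exact: (lb_epsD HG).
rewrite sum_ap; under eq_bigr => x _ do rewrite big_seq1 /= eps_tl mulr1.
move=> <-.
pose f := fun (u : G) (h : H) => eps u * epsH (h * tH r).
have fb : balGH f.
  apply: mk_bal => *; rewrite /f.
  - by rewrite mulrDl (lb_epsD HHb) mulrDr.
  - by rewrite (lb_epsD HG) mulrDl.
  - by rewrite /ractG eps_tl -mulrA -mulrA epsH_sl.
have := B_use Bb (presDP b) fb; rewrite /f mul1r epsH_t => <-.
apply: eq_bigr => x _; congr (_ * _).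
by rewrite -(bs_t Hpi) -rmorphM (bs_eps Hpi).
Qed.

Lemma eps_mulB b b' : B b -> eps (b * b') = eps b * eps b'.
Proof.
move=> Bb; rewrite (lb_epsM1 HG) (lb_epsM2 HG) eps_s.
exact: eps_bt.
Qed.


Lemma B0 : B 0.
Proof.
apply: (B_of (xs := [::])); first by rewrite Delta0 /tsum big_nil.
move=> A f fb; rewrite big_nil big_seq1 /=; symmetry; exact: (bal_0l fb).
Qed.

Lemma BB x y : B x -> B y -> B (x - y).
Proof.
move=> Bx By.
have E : Delta (x - y) = tsum tens (presD x ++ topp (presD y)).
  by rewrite DeltaB tsum_cat tsum_topp -!presDP.
apply: (B_of E) => A f fb; rewrite big_seq1 /mapPi map_cat big_cat.
have E2 : \sum_(p <- [seq (p.1, pi p.2) | p <- topp (presD y)]) f p.1 p.2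
    = - \sum_(p <- presD y) f p.1 (pi p.2).
  rewrite /topp -map_comp big_map -sumrN; apply: eq_bigr => p _.
  by rewrite /= (bal_Nl fb).
rewrite E2 big_map (B_use Bx (presDP x) fb) (B_use By (presDP y) fb) /=.
by rewrite (bal_Bl fb).
Qed.

Lemma B1 : B 1.
Proof. by apply: (B_of Delta1); rewrite /mapPi /= rmorph1. Qed.

Lemma Bs r : B (s r).
Proof. by apply: (B_of (Delta_s r)); rewrite /mapPi /= rmorph1. Qed.

Lemma BM b b' : B b -> B b' -> B (b * b').
Proof.
move=> Bb Bb'; apply: (B_of (lb_DeltaM HG (presDP b) (presDP b'))) => A f fb.
rewrite big_map big_seq1 sum_ap /=.
set xs := presD b; set ys := presD b'.
transitivity (\sum_(y <- ys) \sum_(x <- xs) f (x.1 * y.1) (pi x.2 * pi y.2)).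
  rewrite exchange_big; apply: eq_bigr => y _; apply: eq_bigr => x _.
  by rewrite rmorphM.
pose g := fun u h => \sum_(x <- xs) f (x.1 * u) (pi x.2 * h).
have gb : balGH g.
  apply: mk_bal => [u h h' _ _|u u' h _|u r h _]; rewrite /g.
  - by rewrite -big_split; apply: eq_bigr => x _; rewrite mulrDr (bal_Dr fb).
  - by rewrite -big_split; apply: eq_bigr => x _; rewrite mulrDr (bal_Dl fb).
  - have TK := lb_Delta_takeuchi HG r (presDP b).
    have Fb : balG (fun v w => f (v * u) (pi w * h)).
      apply: mk_bal => [v w w' _ _|v v' w _|v r' w _].
      + by rewrite rmorphD mulrDl (bal_Dr fb).
      + by rewrite mulrDl (bal_Dl fb).
      + rewrite /ractG /lactG -mulrA.
        have := bal_act fb (v * u) r' (n := pi w * h) I; rewrite /ractG => ->.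
        by rewrite rmorphM (bs_s Hpi) mulrA.
    have := Tfact Fb TK; rewrite !big_map /= => E'.
    transitivity (\sum_(x <- xs) f (x.1 * t r * u) (pi x.2 * h)).
      by apply: eq_bigr => x _; rewrite mulrA.
    rewrite E'; apply: eq_bigr => x _.
    by rewrite rmorphM (bs_s Hpi) mulrA.
rewrite (eq_bigr (fun y => g y.1 (pi y.2))); last by move=> y _; rewrite /g.
rewrite (B_use Bb' (presDP b') gb) /g.
pose k := fun u (h : H) => f (u * b') h.
have kb : balGH k.
  apply: mk_bal => [u h h' _ _|u u' h _|u r h _]; rewrite /k.
  - exact: (bal_Dr fb).
  - by rewrite mulrDl (bal_Dl fb).
  - rewrite /ractG -mulrA.
    by have := bal_act fb (u * b') r (n := h) I; rewrite /ractG => ->.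
rewrite (eq_bigr (fun x => k x.1 (pi x.2))); last by move=> x _; rewrite /k mulr1.
by rewrite (B_use Bb (presDP b) kb).
Qed.

Lemma Bsl r b : B b -> B (s r * b).
Proof. by move=> Bb; apply: BM => //; apply: Bs. Qed.

Lemma BD x y : B x -> B y -> B (x + y).
Proof.
move=> Bx By; have -> : x + y = x - (0 - y) by rewrite sub0r opprK.
by apply: BB => //; apply: BB => //; apply: B0.
Qed.

Lemma pi_Bplus x : B x -> eps x = 0 -> pi x = 0.
Proof.
move=> Bx ex.
pose f := fun (u : G) (h : H) => sH (eps u) * h.
have fb : balGH f.
  apply: mk_bal => *; rewrite /f.
  - by rewrite mulrDr.
  - by rewrite (lb_epsD HG) rmorphD mulrDl.
  - by rewrite /ractG eps_tl rmorphM mulrA.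
have := B_use Bx (presDP x) fb; rewrite /f ex rmorph0 mul0r => E.
rewrite -(lb_counitl HG (presDP x)) add_sum; last by move=> a b; rewrite rmorphD.
apply: (etrans _ E); apply: eq_bigr => p _.
by rewrite rmorphM (bs_s Hpi).
Qed.


Lemma BZ r (x : rmod s) : B x -> B (r *: x).
Proof. exact: Bsl. Qed.
Definition Bsub := subl (V := rmod s) B0 BB BZ.
Definition bval (x : Bsub) : G := proj1_sig x.
Lemma bvalP (x : Bsub) : B (bval x).
Proof. exact: proj2_sig x. Qed.
Definition toB (g : G) : Bsub :=
  match pselect (B g) with left h => exist _ g h | right _ => 0 end.
Lemma toBK g : B g -> bval (toB g) = g.
Proof. by rewrite /toB; case: pselect. Qed.
Lemma bvalK x : toB (bval x) = x.
Proof. by apply: subl_inj; change (bval (toB (bval x)) = bval x); rewrite toBK //; apply: bvalP. Qed.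
Lemma bvalD x y : bval (x + y) = bval x + bval y. Proof. by []. Qed.
Lemma bvalZ r x : bval (r *: x) = s r * bval x. Proof. by []. Qed.
Lemma bvalN x : bval (- x) = - bval x. Proof. by []. Qed.

Local Notation teqB := (teq (ractG t) (fun r (n : Bsub) => r *: n)).
Definition mapv (xs : seq (G * Bsub)) := [seq (p.1, bval p.2) | p <- xs].

Lemma injT xs ys : tsum tens (mapv xs) = tsum tens (mapv ys) -> teqB xs ys.
Proof.
move=> E.
have H0 : teqB (xs ++ topp ys) [::].
  apply: (Hflat (N := rmod s) (i := bval)) => //.
  - by move=> a b ab; apply: subl_inj.
  move=> A f fb; have fb' : balG f by exact: fb.
  rewrite big_nil map_cat big_cat.
  have -> : \sum_(p <- [seq (p.1, bval p.2) | p <- topp ys]) f p.1 p.2 =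
     - \sum_(p <- mapv ys) f p.1 p.2.
    rewrite /topp -map_comp /mapv big_map big_map -sumrN; apply: eq_bigr => p _.
    by rewrite /= (bal_Nl fb').
  by rewrite (Tfact fb' E); apply: subrr.
move=> A f fb; have := H0 A f fb; rewrite big_cat big_nil (sum_topp _ fb).
by move/eqP; rewrite subr_eq0 => /eqP.
Qed.

Lemma injB xs ys : (forall p, p \in xs -> B p.2) -> (forall p, p \in ys -> B p.2) ->
  tsum tens xs = tsum tens ys -> teq_on B (ractG t) (lactG s) xs ys.
Proof.
move=> Hx Hy E.
pose lift (zs : seq (G * G)) := [seq (p.1, toB p.2) | p <- zs].
have mapK zs : (forall p, p \in zs -> B p.2) -> mapv (lift zs) = zs.
  move=> Hz; rewrite /mapv /lift -map_comp; rewrite -[RHS]map_id; apply/eq_in_map.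
  by case=> a b /Hz /= Bb; rewrite toBK.
have T1 : teqB (lift xs) (lift ys) by apply: injT; rewrite !mapK.
move=> A f fb.
pose f' := fun m (n : Bsub) => f m (bval n).
have fb' : balanced_on (fun _ => True) (ractG t) (fun r (n : Bsub) => r *: n) f'.
  apply: mk_bal => [m n n' _ _|m m' n _|m r n _]; rewrite /f'.
  - by rewrite bvalD (bal_Dr' fb) //; apply: bvalP.
  - by rewrite (bal_Dl fb) //; apply: bvalP.
  - by rewrite (bal_act fb) //; apply: bvalP.
have := T1 A f' fb'; rewrite /f' /lift !big_map /=.
rewrite (eq_big_seq (fun p : G * G => f p.1 p.2)); last by move=> p /Hx /= Bp; rewrite toBK.
by rewrite [in RHS](eq_big_seq (fun p : G * G => f p.1 p.2)) //; move=> p /Hy /= Bp; rewrite toBK.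
Qed.


Lemma scG_D r m m' : s r * (m + m') = s r * m + s r * m'.
Proof. exact: mulrDr. Qed.
Lemma scG_Dl a b m : s (a + b) * m = s a * m + s b * m.
Proof. by rewrite rmorphD mulrDl. Qed.
Lemma scG_A a b m : s a * (s b * m) = s (a * b) * m.
Proof. by rewrite rmorphM mulrA. Qed.
Lemma scG_1 m : s 1 * m = m.
Proof. by rewrite rmorph1 mul1r. Qed.
Lemma scG_R r r' m : s r * ractG t m r' = ractG t (s r * m) r'.
Proof. by rewrite /ractG mulrA (lb_st HG) mulrA. Qed.

Local Notation lactH := (fun r (h : H) => sH r * h).
Definition TGH := Tens lactH scG_D scG_Dl scG_A scG_1 scG_R.
Definition tc (xs : seq (G * H)) : TGH := tcls lactH scG_D scG_Dl scG_A scG_1 scG_R xs.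

Definition phi0 (g : G) : TGH := tc (mapPi (presD g)) - tc [:: (g, 1)].

Lemma tc_pres g xs : Delta g = tsum tens xs -> tc (mapPi (presD g)) = tc (mapPi xs).
Proof. by move=> E; apply: tcls_eq; apply: Tpi; rewrite -presDP. Qed.

Lemma phi0_add : additive_fun phi0.
Proof.
move=> x y; rewrite /phi0.
have E : Delta (x + y) = tsum tens (presD x ++ presD y).
  by rewrite (lb_DeltaD HG) tsum_cat -!presDP.
rewrite (tc_pres E) /mapPi map_cat /tc tcls_cat tcls_Dl.
by rewrite opprD addrACA.
Qed.

Lemma phi0_scale r g : phi0 (s r * g) = r *: phi0 g.
Proof.
rewrite /phi0.
have E : Delta (s r * g) = tsum tens [seq (s r * p.1, p.2) | p <- presD g].
  have := lb_Delta_bimod HG r 1 (presDP g); rewrite (lb_t1 HG) mulr1 => ->.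
  by congr tsum; apply: eq_map => p; rewrite mul1r.
rewrite (tc_pres E) scalerBr /tc !tcls_scale /tsc /=; congr (tcls _ _ _ _ _ _ _ - _).
by rewrite /mapPi -!map_comp.
Qed.

Lemma phi0_B g : phi0 g = 0 <-> B g.
Proof.
rewrite /phi0; split.
  by move/eqP; rewrite subr_eq0 => /eqP /tclsP H1; apply/B_iff.
by move/B_iff => H1; rewrite /tc (tcls_eq _ _ _ _ _ H1) subrr.
Qed.

Lemma phi0B x y : phi0 (x - y) = phi0 x - phi0 y.
Proof. exact: add_B phi0_add. Qed.

Lemma B0r : B (0 : rmod s). Proof. exact: B0. Qed.
Lemma BBr (x y : rmod s) : B x -> B y -> B (x - y). Proof. exact: BB. Qed.
Definition GBq := QL B0r BBr BZ.
Definition gcls (x : G) : GBq := lcls B0r BBr BZ (x : rmod s).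
Definition phib (q : GBq) : TGH := phi0 (rep q).

Lemma phib_cls x : phib (gcls x) = phi0 x.
Proof.
rewrite /phib; apply/eqP; rewrite -subr_eq0 -phi0B; apply/eqP/phi0_B.
exact: (@lrep_cls _ _ _ B0r BBr BZ x).
Qed.

Lemma gclsK (q : GBq) : gcls (rep q) = q.
Proof. exact: lclsK. Qed.

Lemma ca_val_lem b : B b -> exists xs, (forall p, p \in xs -> B p.2) /\ Delta b = tsum tens xs.
Proof.
move=> Bb; set xs := presD b.
set zs : seq (G * GBq) := [seq (p.1, gcls p.2) | p <- xs].
have flat : teq (ractG t) (fun r (n : GBq) => r *: n) zs [::].
  apply: (Hflat (N := TGH) (i := phib)).
  - move=> q q'; rewrite -[q]gclsK -[q']gclsK /gcls -lcls_add.
    by rewrite -!/(gcls _) !phib_cls phi0_add.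
  - move=> r q; rewrite -[q]gclsK /gcls -lcls_scale -!/(gcls _) !phib_cls.
    exact: phi0_scale.
  - move=> q q'; rewrite -[q]gclsK -[q']gclsK !phib_cls => E.
    apply: lcls_S; apply/phi0_B; by rewrite phi0B E subrr.
  move=> A f fb; rewrite big_nil /zs -map_comp big_map.
  rewrite (eq_bigr (fun p : G * G => f p.1 (tc (mapPi (presD p.2))) - f p.1 (tc [:: (p.2, 1)]))); last first.
    by move=> p _; rewrite /= phib_cls /phi0 (bal_Br fb).
  rewrite sumrB; apply/eqP; rewrite subr_eq0; apply/eqP.
  have F3b : balanced3_on (fun _ => True) s t (lactG s) (fun a x y => f a (tc [:: (x, pi y)])).
    split => [a a' x y _|a x x' y _|a x y y' _ _|r a x y _|r a x y _].
    - exact: (bal_Dl fb).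
    - by rewrite /tc tcls_Dl (bal_Dr fb).
    - by rewrite rmorphD /tc tcls_Dr (bal_Dr fb).
    - have := bal_act fb a r (n := tc [:: (x, pi y)]) I; rewrite /ractG => ->.
      by rewrite /tc tcls_scale1.
    - have -> : t r * x = ractG t x r by [].
      by rewrite /tc tcls_act /lactG rmorphM (bs_s Hpi).
  have CO := lb_coassoc HG (presDP b) (fun p _ => conj (presDP p.1) (presDP p.2)) F3b.
  transitivity (\sum_(p <- xs) \sum_(q <- presD p.2) f p.1 (tc [:: (q.1, pi q.2)])).
    by apply: eq_bigr => p _; rewrite /tc tcls_sum /mapPi big_map (bal_sumr fb).
  rewrite -CO.
  pose Phi := fun (u : G) (h : H) => \sum_(q <- presD u) f q.1 (tc [:: (q.2, h)]).
  have psib : forall h, balG (fun x y => f x (tc [:: (y, h)])).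
    move=> h; apply: mk_bal => [x y y' _ _|x x' y _|x r y _].
    - by rewrite /tc tcls_Dl (bal_Dr fb).
    - exact: (bal_Dl fb).
    - have := bal_act fb x r (n := tc [:: (y, h)]) I; rewrite /ractG => ->.
      by rewrite /tc tcls_scale1.
  have Phib : balGH Phi.
    apply: mk_bal => [u h h' _ _|u u' h _|u r h _]; rewrite /Phi.
    - rewrite -big_split; apply: eq_bigr => q _.
      by rewrite /tc tcls_Dr (bal_Dr fb).
    - rewrite -big_cat; apply: (Tfact (psib h)).
      by rewrite tsum_cat -!presDP (lb_DeltaD HG).
    - have E : Delta (t r * u) = tsum tens [seq (p.1, t r * p.2) | p <- presD u].
        have := lb_Delta_bimod HG 1 r (presDP u); rewrite s1 mul1r => ->.
        by congr tsum; apply: eq_map => p; rewrite mul1r.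
      rewrite /ractG (Tfact (psib h) (ys := [seq (p.1, t r * p.2) | p <- presD u])); last first.
        by rewrite -E -presDP.
      rewrite big_map; apply: eq_bigr => q _ /=.
      have -> : t r * q.2 = ractG t q.2 r by [].
      by rewrite /tc tcls_act.
  rewrite (eq_bigr (fun p => Phi p.1 (pi p.2))) //.
  by rewrite (B_use Bb (presDP b) Phib) /Phi.
pose S' := fun w : T => exists ys, (forall p, p \in ys -> B p.2) /\ w = tsum tens ys.
have S0' : S' 0 by exists [::]; split => //; rewrite /tsum big_nil.
have SB' : forall x y, S' x -> S' y -> S' (x - y).
  move=> x y [ys1 [H1 ->]] [ys2 [H2 ->]]; exists (ys1 ++ topp ys2); split.
    move=> p; rewrite mem_cat => /orP [/H1 //|].
    by case/mapP => q /H2 Bq ->.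
  by rewrite tsum_cat tsum_topp.
pose f2 := fun a (q : GBq) => qcls S0' SB' (tens a (rep q)).
have key : forall x y a, B (x - y) -> qcls S0' SB' (tens a x) = qcls S0' SB' (tens a y).
  move=> x y a Bxy.
  have -> : tens a x = tens a y + tens a (x - y).
    by rewrite -(bal_Dr tens_bal) addrC subrK.
  rewrite qcls_add (@qcls_S _ _ S0' SB' (tens a (x - y))) ?addr0 //.
  exists [:: (a, x - y)]; split; last by rewrite tsum1.
  by move=> p; rewrite inE => /eqP ->.
have f2b : balanced_on (fun _ => True) (ractG t) (fun r (n : GBq) => r *: n) f2.
  apply: mk_bal => [a q q' _ _|a a' q _|a r q _]; rewrite /f2.
  - rewrite -qcls_add -(bal_Dr tens_bal); apply: key.
    apply: (@lcls_eq _ _ _ B0r BBr BZ).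
    by rewrite lcls_add -!/(gcls _) !gclsK.
  - by rewrite (bal_Dl tens_bal) //; apply: qcls_add.
  - have := bal_act tens_bal a r (n := rep q) I => ->.
    apply: key; rewrite /lactG.
    have -> : s r * rep q = (r *: (rep q : rmod s) : rmod s) by [].
    apply: (@lcls_eq _ _ _ B0r BBr BZ).
    by rewrite lcls_scale -!/(gcls _) !gclsK.
have := flat _ f2 f2b; rewrite big_nil /zs big_map /f2 /=.
rewrite (eq_bigr (fun p => qcls S0' SB' (tens p.1 p.2))); last first.
  move=> p _; apply: key.
  exact: (@lrep_cls _ _ _ B0r BBr BZ p.2).
rewrite -qcls_sum -/(tsum tens xs) -presDP => /(@qcls_eq0 _ _ S0' SB') [ys [H1 H2]].
by exists ys; rewrite H2.
Qed.


Definition TGG := Tens (lactG s) scG_D scG_Dl scG_A scG_1 scG_R.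
Definition tg (xs : seq (G * G)) : TGG := tcls (lactG s) scG_D scG_Dl scG_A scG_1 scG_R xs.
Local Notation lactB := (fun r (n : Bsub) => r *: n).
Definition TGB := Tens lactB scG_D scG_Dl scG_A scG_1 scG_R.
Definition tb (xs : seq (G * Bsub)) : TGB := tcls lactB scG_D scG_Dl scG_A scG_1 scG_R xs.
Definition iota (w : TGB) : TGG := tg (mapv (rep w)).

Lemma teq_mapv xs ys : teqB xs ys -> teq (ractG t) (lactG s) (mapv xs) (mapv ys).
Proof.
move=> E A f fb; rewrite !big_map.
apply: (E A (fun m n => f m (bval n))).
apply: mk_bal => [m n n' _ _|m m' n _|m r n _].
- by rewrite bvalD (bal_Dr fb).
- exact: (bal_Dl fb).
- exact: (bal_act fb).
Qed.

Lemma iota_tb xs : iota (tb xs) = tg (mapv xs).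
Proof.
rewrite /iota; apply: tcls_eq; apply: teq_mapv.
exact: (@rep_cls _ (lz (tlpre lactB scG_D scG_Dl scG_A scG_1 scG_R)) xs).
Qed.

Lemma tb_rep (w : TGB) : tb (rep w) = w.
Proof. exact: tcls_rep. Qed.

Lemma iota_add : additive_fun iota.
Proof.
move=> w w'; rewrite -[w]tb_rep -[w']tb_rep /tb -tcls_cat -!/(tb _) !iota_tb.
by rewrite /mapv map_cat /tg tcls_cat.
Qed.
Lemma iota_scale r w : iota (r *: w) = r *: iota w.
Proof.
rewrite -[w]tb_rep /tb tcls_scale -!/(tb _) !iota_tb /tg tcls_scale.
by congr tcls; rewrite /mapv /tsc -!map_comp.
Qed.
Lemma iota_inj : injective iota.
Proof.
move=> w w'; rewrite -[w]tb_rep -[w']tb_rep !iota_tb => /tclsP E.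
apply: tcls_eq; apply: injT.
by have := E T tens tens_bal.
Qed.

Lemma bal3_Nl (A : zmodType) (f : G -> G -> G -> A) a x n :
  balanced3_on B s t (lactG s) f -> B n -> f (- a) x n = - f a x n.
Proof.
case=> H1 _ _ _ _ Bn; apply: (addrI (f a x n)); rewrite -H1 // !subrr.
by apply: (addrI (f 0 x n)); rewrite -H1 // !addr0.
Qed.

Lemma coassocB b xs (dl dr : G * G -> seq (G * G)) : B b ->
  coact_rep tens Delta B b xs ->
  (forall p, p \in xs -> Delta p.1 = tsum tens (dl p) /\ coact_rep tens Delta B p.2 (dr p)) ->
  forall (A : zmodType) (f : G -> G -> G -> A),
    balanced3_on B s t (lactG s) f ->
    \sum_(p <- xs) \sum_(q <- dl p) f q.1 q.2 p.2
    = \sum_(p <- xs) \sum_(q <- dr p) f p.1 q.1 q.2.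
Proof.
move=> Bb [Bxs Eb] Hd A f fb.
set zs1 := [seq (q.1, tb [:: (q.2, toB p.2)]) | p <- xs, q <- dl p].
set zs2 := [seq (- p.1, tb [seq (q.1, toB q.2) | q <- dr p]) | p <- xs].
have flat : teq (ractG t) (fun r (n : TGB) => r *: n) (zs1 ++ zs2) [::].
  apply: (Hflat (N := TGG) (i := iota)).
  - exact: iota_add.
  - exact: iota_scale.
  - exact: iota_inj.
  move=> A' F Fb; rewrite big_nil map_cat sum_cat /zs1 /zs2 !big_map.
  apply/eqP; rewrite addr_eq0; apply/eqP.
  rewrite big_allpairs_dep.
  rewrite [LHS](eq_big_seq (fun p => \sum_(q <- dl p) F q.1 (tg [:: (q.2, p.2)]))); last first.
    move=> p pin; apply: eq_bigr => q _; rewrite /= iota_tb /mapv /= toBK //.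
    exact: Bxs.
  rewrite [RHS](_ : _ = \sum_(p <- xs) \sum_(q <- dr p) F p.1 (tg [:: q])).
    2: { rewrite -sumrN; apply: eq_big_seq => p pin.
    rewrite /= iota_tb (bal_Nl Fb) // opprK.
    have [_ [Bdr _]] := Hd p pin.
    rewrite /tg tcls_sum (bal_sumr Fb) /mapv -map_comp big_map.
    apply: eq_big_seq => q qin /=; rewrite toBK //; last exact: Bdr.
    by case: q qin. }
  have F3b : balanced3_on (fun _ => True) s t (lactG s) (fun a x y => F a (tg [:: (x, y)])).
    split => [a a' x y _|a x x' y _|a x y y' _ _|r a x y _|r a x y _].
    - exact: (bal_Dl Fb).
    - by rewrite /tg tcls_Dl (bal_Dr Fb).
    - by rewrite /tg tcls_Dr (bal_Dr Fb).
    - have := bal_act Fb a r (n := tg [:: (x, y)]) I; rewrite /ractG => ->.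
      by rewrite /tg tcls_scale1.
    - have -> : t r * x = ractG t x r by [].
      by rewrite /tg tcls_act.
  have H2 : forall p, p \in xs -> Delta p.1 = tsum tens (dl p) /\ Delta p.2 = tsum tens (dr p).
    by move=> p /Hd [-> [_ ->]].
  have CO := lb_coassoc HG Eb H2 F3b.
  rewrite CO; apply: eq_bigr => p _; apply: eq_bigr => q _.
  by case: q.
pose g := fun (a : G) (w : TGB) => tlift (fun x (n : Bsub) => f a x (bval n)) w.
have gab : forall a, balanced_on (fun _ => True) (ractG t) lactB (fun x (n : Bsub) => f a x (bval n)).
  move=> a; case: fb => H1 H2' H3 H4 H5.
  apply: mk_bal => [x n n' _ _|x x' n _|x r n _].
  - by rewrite bvalD H3 //; apply: bvalP.
  - by rewrite H2' //; apply: bvalP.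
  - by rewrite /ractG H5 //; apply: bvalP.
have gb : balanced_on (fun _ => True) (ractG t) (fun r (n : TGB) => r *: n) g.
  apply: mk_bal => [a w w' _ _|a a' w _|a r w _]; rewrite /g.
  - rewrite -[w]tb_rep -[w']tb_rep /tb -tcls_cat !tlift_cls ?big_cat //.
  - rewrite -[w]tb_rep /tb !tlift_cls // -big_split; apply: eq_bigr => q _.
    by case: fb => H1 _ _ _ _; rewrite H1 //; apply: bvalP.
  - rewrite -[w]tb_rep /tb tcls_scale !tlift_cls // big_map; apply: eq_bigr => q _.
    by case: fb => _ _ _ H4 _; rewrite /ractG H4 //; apply: bvalP.
have := flat A g gb; rewrite big_nil sum_cat /zs1 /zs2 !big_map.
move/eqP; rewrite addr_eq0 => /eqP.
rewrite big_allpairs_dep /=.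
rewrite [LHS](eq_big_seq (fun p => \sum_(q <- dl p) f q.1 q.2 p.2)); last first.
  move=> p pin; apply: eq_bigr => q _; rewrite /g /tb tlift_cls // big_seq1 /= toBK //.
  exact: Bxs.
move=> ->; rewrite -sumrN; apply: eq_big_seq => p pin.
rewrite /g /tb tlift_cls // big_map -sumrN.
have [_ [Bdr _]] := Hd p pin.
apply: eq_big_seq => q qin /=; rewrite toBK; last exact: Bdr.
by rewrite (bal3_Nl _ _ fb) ?opprK //; apply: Bdr.
Qed.


Lemma injB' xs ys : (forall p, p \in xs -> B p.2) -> (forall p, p \in ys -> B p.2) ->
  tsum tens xs = tsum tens ys -> teq_on B (ractG t) (lactG s) xs ys.
Proof. exact: injB. Qed.

Lemma Delta_sl r g xs : Delta g = tsum tens xs ->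
  Delta (s r * g) = tsum tens [seq (s r * p.1, p.2) | p <- xs].
Proof.
move=> E; have := lb_Delta_bimod HG r 1 E; rewrite (lb_t1 HG) mulr1 => ->.
by congr tsum; apply: eq_map => p; rewrite mul1r.
Qed.

Lemma comod : is_comodule_algebra_Delta s t tens Delta eps B.
Proof.
split.
- exact: B0.
- exact: BB.
- exact: B1.
- exact: BM.
- exact: Bs.
- exact: ca_val_lem.
- move=> b b' xs ys zs Bb Bb' [Hx Ex] [Hy Ey] [Hz Ez]; apply: injB' => //.
    by move=> p; rewrite mem_cat => /orP [/Hx|/Hy].
  by rewrite tsum_cat -Ez -Ex -Ey (lb_DeltaD HG).
- move=> r b xs ys Bb [Hx Ex] [Hy Ey]; apply: injB' => //.
    by move=> p /mapP [q /Hx Bq ->].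
  by rewrite -Ey -(Delta_sl r Ex).
- move=> b xs dl dr Bb Hc Hd A f fb; exact: (coassocB Bb Hc Hd fb).
- by move=> b xs Bb [_ E]; apply: (lb_counitl HG E).
- move=> xs [Hx Ex]; apply: injB' => //.
    by move=> p; rewrite inE => /eqP ->; apply: B1.
  by rewrite -Ex Delta1.
- move=> b b' xs ys zs Bb Bb' [Hx Ex] [Hy Ey] [Hz Ez]; apply: injB' => //.
    move=> p /allpairsP [[x y] [/= xin yin ->]] /=.
    by apply: BM; [apply: Hx | apply: Hy].
  by rewrite -Ez; apply: (lb_DeltaM HG).
Qed.

Definition Bplus := fun g => B g /\ eps g = 0.
Definition GBplus := fun x => exists xs : seq (G * G),
        (forall p, p \in xs -> Bplus p.2) /\ x = \sum_(p <- xs) p.1 * p.2.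
Definition dec x := exists xs ys : seq (G * G),
          [/\ forall p, p \in xs -> GBplus p.1,
              forall p, p \in ys -> GBplus p.2 &
              Delta x = tsum tens xs + tsum tens ys].

Lemma GBplus1 a y : Bplus y -> GBplus (a * y).
Proof.
move=> By; exists [:: (a, y)]; split; last by rewrite big_seq1.
by move=> p; rewrite inE => /eqP ->.
Qed.

Lemma eps_GBplus1 g y : Bplus y -> eps (g * y) = 0.
Proof. by case=> _ ey; rewrite (lb_epsM1 HG) ey rmorph0 mulr0 eps0. Qed.

Lemma dec0 : dec 0.
Proof. by exists [::], [::]; split => //; rewrite Delta0 /tsum !big_nil addr0. Qed.

Lemma decD x y : dec x -> dec y -> dec (x + y).
Proof.
move=> [xs1 [ys1 [H1 H2 E1]]] [xs2 [ys2 [H3 H4 E2]]].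
exists (xs1 ++ xs2), (ys1 ++ ys2); split.
- by move=> p; rewrite mem_cat => /orP [/H1|/H3].
- by move=> p; rewrite mem_cat => /orP [/H2|/H4].
by rewrite (lb_DeltaD HG) E1 E2 !tsum_cat addrACA.
Qed.

Lemma dec1 g y : Bplus y -> dec (g * y).
Proof.
move=> [By ey]; have [ys [Hy Ey]] := ca_val_lem By.
set ys1 := [seq (c.1, c.2 - s (eps c.2)) | c <- ys].
have Ey' : Delta y = tsum tens (ys1 ++ [:: (y, 1)]).
  rewrite tsum_cat tsum1 /tsum /ys1 big_map.
  rewrite (eq_bigr (fun c => tens c.1 c.2 - tens (t (eps c.2) * c.1) 1)); last first.
    move=> c _ /=; rewrite (bal_Br tens_bal); congr (_ - _).
    have := bal_act tens_bal c.1 (eps c.2) (n := 1) I; rewrite /ractG /lactG mulr1 => ->.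
    by [].
  rewrite sumrB -(bal_suml tens_bal) // (lb_counitr HG Ey) -/(tsum tens ys) -Ey.
  by rewrite subrK.
have E := lb_DeltaM HG (presDP g) Ey'.
exists [seq (a.1 * y, a.2 * 1) | a <- presD g],
       [seq (a.1 * c.1, a.2 * c.2) | a <- presD g, c <- ys1]; split.
- by move=> p /mapP [a _ ->] /=; apply: GBplus1.
- move=> p /allpairsP [[a c] [/= ain /mapP [c' c'in ->] ->]] /=.
  apply: GBplus1; split.
    by apply: BB; [apply: Hy | apply: Bs].
  by rewrite (add_B _ _ (lb_epsD HG)) eps_s subrr.
rewrite E addrC /tsum !sum_ap big_map -big_split; apply: eq_bigr => a _ /=.
by rewrite big_cat big_seq1.
Qed.

Lemma main_sec :
  [/\
    is_comodule_algebra_Delta s t tens Delta eps B,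
    [/\ forall b b', B b -> B b' -> eps (b + b') = eps b + eps b',
        forall b b', B b -> B b' -> eps (b * b') = eps b * eps b' &
        eps 1 = 1],
    [/\ Bplus 0,
        forall x y, Bplus x -> Bplus y -> Bplus (x - y) &
        forall b x, B b -> Bplus x -> Bplus (b * x) /\ Bplus (x * b)],
    forall x, GBplus x -> pi x = 0 &
    [/\ GBplus 0,
        forall x y, GBplus x -> GBplus y -> GBplus (x + y),
        forall g x, GBplus x -> GBplus (g * x),
        forall x, GBplus x -> eps x = 0 &
        forall x, GBplus x -> dec x]].
Proof.
split.
- exact: comod.
- split.
  + by move=> b b' _ _; apply: (lb_epsD HG).
  + by move=> b b' Bb _; apply: eps_mulB.
  + exact: (lb_eps1 HG).
- split.
  + by split; [apply: B0 | apply: eps0].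
  + move=> x y [Bx ex] [By ey]; split; first exact: BB.
    by rewrite (add_B _ _ (lb_epsD HG)) ex ey subrr.
  + move=> b x Bb [Bx ex]; split; split.
    * exact: BM.
    * by rewrite eps_mulB // ex mulr0.
    * exact: BM.
    * by rewrite eps_mulB // ex mul0r.
- move=> x [xs [Hx ->]]; rewrite rmorph_sum big1_seq // => p /andP [_ pin].
  by have [Bp ep] := Hx p pin; rewrite rmorphM (pi_Bplus Bp ep) mulr0.
- split.
  + by exists [::]; split => //; rewrite big_nil.
  + move=> x y [xs [Hx ->]] [ys [Hy ->]]; exists (xs ++ ys); split.
      by move=> p; rewrite mem_cat => /orP [/Hx|/Hy].
    by rewrite sum_cat.
  + move=> g x [xs [Hx ->]]; exists [seq (g * p.1, p.2) | p <- xs]; split.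
      by move=> p /mapP [q /Hx Bq ->].
    by rewrite big_map mulr_sumr; apply: eq_bigr => p _; rewrite mulrA.
  + move=> x [xs [Hx ->]]; rewrite (add_sum _ _ (lb_epsD HG)) big1_seq //.
    by move=> p /andP [_ pin]; apply: eps_GBplus1; apply: Hx.
  + move=> x [xs [Hx ->]]; elim: xs Hx => [|p xs IH] Hx.
      by rewrite big_nil; apply: dec0.
    rewrite big_cons; apply: decD.
      by apply: dec1; apply: Hx; rewrite inE eqxx.
    by apply: IH => q qin; apply: Hx; rewrite inE qin orbT.
Qed.

End Main.

Unset Implicit Arguments.
Theorem lemma4p10 (R G H : nzRingType)
    (s : {rmorphism R -> G}) (t : R -> G) (T : zmodType) (tens : G -> G -> T)
    (Delta : G -> T) (eps : G -> R)
    (sH : {rmorphism R -> H}) (tH : R -> H) (TH : zmodType) (tensH : H -> H -> TH)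
    (DeltaH : H -> TH) (epsH : H -> R) (pi : {rmorphism G -> H}) :
  is_lbialgebroid s t tens Delta eps ->
  is_lbialgebroid sH tH tensH DeltaH epsH ->
  is_bialgebroid_surj s t tens Delta eps sH tH tensH DeltaH epsH pi ->
  right_flat (ractG t) ->
  let B := hopf_kernel t sH pi tens Delta in
  let Bplus := fun g => B g /\ eps g = 0 in
  let GBplus := fun x => exists xs : seq (G * G),
        (forall p, p \in xs -> Bplus p.2) /\ x = \sum_(p <- xs) p.1 * p.2 in
  [/\
    (* (i) *)
    is_comodule_algebra_Delta s t tens Delta eps B,
    (* (ii) eps|_B is an algebra morphism; B^+ two-sided ideal; G B^+ ⊆ ker pi *)
    [/\ forall b b', B b -> B b' -> eps (b + b') = eps b + eps b',
        forall b b', B b -> B b' -> eps (b * b') = eps b * eps b' &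
        eps 1 = 1],
    [/\ Bplus 0,
        forall x y, Bplus x -> Bplus y -> Bplus (x - y) &
        forall b x, B b -> Bplus x -> Bplus (b * x) /\ Bplus (x * b)],
    forall x, GBplus x -> pi x = 0 &
    (* (iii) G B^+ is a left G-submodule and a coring coideal *)
    [/\ GBplus 0,
        forall x y, GBplus x -> GBplus y -> GBplus (x + y),
        forall g x, GBplus x -> GBplus (g * x),
        forall x, GBplus x -> eps x = 0 &
        forall x, GBplus x -> exists xs ys : seq (G * G),
          [/\ forall p, p \in xs -> GBplus p.1,
              forall p, p \in ys -> GBplus p.2 &
              Delta x = tsum tens xs + tsum tens ys]]].
Proof.
move=> HG HH Hpi Hflat; exact: (main_sec HG HH Hpi Hflat).
Qed.
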